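(* Let $k$ be a field of characteristic $0$ and let $\mathcal L$ be a Lie torus of type $(\Delta,\Lambda)$ over $k$. Suppose $\alpha\in\Delta^\times$, $0\neq x\in\mathcal L_\alpha$, $0\neq y\in\mathcal L_{-\alpha}$ and $[x,y]\in\mathcal L_0^0$. Then there is $\lambda\in\Lambda$ with $x\in\mathcal L_\alpha^\lambda$ and $y\in\mathcal L_{-\alpha}^{-\lambda}$.
   Context: An irreducible finite root system in a finite-dimensional $k$-vector space $\mathcal X$ is a finite subset $\Delta\subset\mathcal X$ with $0\in\Delta$ such that $\Delta^\times:=\Delta\setminus\{0\}$ is an irreducible (possibly non-reduced) finite root system in the usual sense. Write $Q=\mathrm{span}_{\mathbb Z}(\Delta)$, $\alpha^\vee$ for the coroot of $\alpha\in\Delta^\times$, $\langle\beta,\alpha^\vee\rangle$ for the natural pairing, and $\Delta^\times_{\mathrm{ind}}=\Delta^\times\setminus 2\Delta^\times$. Let $\Lambda$ be a finitely generated free abelian group. A Lie torus of type $(\Delta,\Lambda)$ is a Lie algebra $\mathcal L$ over $k$ with a $Q\times\Lambda$-grading $\mathcal L=\bigoplus_{(\alpha,\lambda)\in Q\times\Lambda}\mathcal L_\alpha^\lambda$ (with $\mathcal L_\alpha:=\bigoplus_\lambda\mathcal L_\alpha^\lambda$, $\mathcal L^\lambda:=\bigoplus_\alpha\mathcal L_\alpha^\lambda$) such that: (LT1) $\{\alpha\in Q:\mathcal L_\alpha\neq0\}=\Delta$; (LT2)(i) $\mathcal L_\alpha^0\neq0$ for all $\alpha\in\Delta^\times_{\mathrm{ind}}$;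 (ii) whenever $\alpha\in\Delta^\times$ and $\mathcal L_\alpha^\lambda\neq0$ there exist $e\in\mathcal L_\alpha^\lambda$, $f\in\mathcal L_{-\alpha}^{-\lambda}$ with $\mathcal L_\alpha^\lambda=ke$, $\mathcal L_{-\alpha}^{-\lambda}=kf$ and $[[e,f],x]=\langle\beta,\alpha^\vee\rangle x$ for all $x\in\mathcal L_\beta$, $\beta\in Q$; (LT3) $\mathcal L$ is generated as an algebra by the $\mathcal L_\alpha$, $\alpha\in\Delta^\times$; (LT4) $\Lambda$ is generated by $\{\lambda:\mathcal L^\lambda\neq0\}$. *)

(* Defs.v *)
From HB Require Import structures.
From mathcomp Require Import all_boot all_order all_algebra.
Set Implicit Arguments. Unset Strict Implicit. Unset Printing Implicit Defensive.
Import Order.TTheory GRing.Theory Num.Theory.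
Local Open Scope ring_scope.

(* The ambient finite-dimensional space X is modelled as 'rV[k]_d;
   a finite subset Delta of X (containing 0) is a seq D.
   The coroot of alpha is the linear form  beta |-> (beta *m cor alpha) 0 0. *)

Definition pairing (k : fieldType) (d : nat) (cor : 'rV[k]_d -> 'cV[k]_d)
  (beta alpha : 'rV[k]_d) : k := (beta *m cor alpha) ord0 ord0.

Definition in_Dx (k : fieldType) (d : nat) (D : seq 'rV[k]_d) (a : 'rV[k]_d) : Prop :=
  a \in D /\ a != 0.

Definition in_Dx_ind (k : fieldType) (d : nat) (D : seq 'rV[k]_d) (a : 'rV[k]_d) : Prop :=
  in_Dx D a /\ ~ (exists b, in_Dx D b /\ a = 2%:R *: b).

(* Delta^x is a (possibly non-reduced) finite root system in X, with coroots
   given by cor (Bourbaki's axioms; the coroot is then unique). *)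
Definition is_root_system (k : fieldType) (d : nat) (D : seq 'rV[k]_d)
  (cor : 'rV[k]_d -> 'cV[k]_d) : Prop :=
  [/\ (span (filter (fun a : 'rV[k]_d => a != 0) D) = fullv),
      (forall a, in_Dx D a -> pairing cor a a = 2%:R),
      (forall a b, in_Dx D a -> in_Dx D b -> in_Dx D (b - pairing cor b a *: a)) &
      (forall a b, in_Dx D a -> in_Dx D b -> exists z : int, pairing cor b a = z%:~R)].

Definition is_irreducible_rs (k : fieldType) (d : nat) (D : seq 'rV[k]_d)
  (cor : 'rV[k]_d -> 'cV[k]_d) : Prop :=
  forall P : 'rV[k]_d -> Prop,
    (exists a, in_Dx D a /\ P a) -> (exists b, in_Dx D b /\ ~ P b) ->
    exists a b, [/\ in_Dx D a, P a, in_Dx D b, ~ P b & pairing cor b a != 0].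

Definition is_irr_finite_root_system (k : fieldType) (d : nat) (D : seq 'rV[k]_d)
  (cor : 'rV[k]_d -> 'cV[k]_d) : Prop :=
  [/\ (0 : 'rV[k]_d) \in D, is_root_system D cor & is_irreducible_rs D cor].

Definition inQ (k : fieldType) (d : nat) (D : seq 'rV[k]_d) (a : 'rV[k]_d) : Prop :=
  exists c : 'rV[k]_d -> int, a = \sum_(b <- D) b *~ c b.

Definition is_lie_bracket (k : fieldType) (L : lmodType k) (br : L -> L -> L) : Prop :=
  [/\ (forall (c : k) x y z, br (c *: x + y) z = c *: br x z + br y z),
      (forall (c : k) x y z, br z (c *: x + y) = c *: br z x + br z y),
      (forall x, br x x = 0) &
      (forall x y z, br x (br y z) + br y (br z x) + br z (br x y) = 0)].

Definition is_subspace (k : fieldType) (L : lmodType k) (P : L -> Prop) : Prop :=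
  [/\ P 0, (forall x y, P x -> P y -> P (x + y)) & (forall (c : k) x, P x -> P (c *: x))].

(* The grading: Lg a l is the homogeneous subspace L_a^l (a in X, l in Lambda =
   Z^n); components with a outside Q are required to be zero, so this is a
   Q x Lambda grading. *)
Definition is_QL_grading (k : fieldType) (d n : nat) (D : seq 'rV[k]_d)
  (L : lmodType k) (br : L -> L -> L)
  (Lg : 'rV[k]_d -> 'rV[int]_n -> L -> Prop) : Prop :=
  [/\ (forall a l, is_subspace (Lg a l)),
      (forall a l x, Lg a l x -> x != 0 -> inQ D a),
      (forall x : L, exists (s : seq ('rV[k]_d * 'rV[int]_n)) (f : 'rV[k]_d * 'rV[int]_n -> L),
           (forall i, Lg i.1 i.2 (f i)) /\ x = \sum_(i <- s) f i),
      (forall (s : seq ('rV[k]_d * 'rV[int]_n)) (f : 'rV[k]_d * 'rV[int]_n -> L),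
           uniq s -> (forall i, Lg i.1 i.2 (f i)) -> \sum_(i <- s) f i = 0 ->
           forall i, i \in s -> f i = 0) &
      (forall a b l m x y, Lg a l x -> Lg b m y -> Lg (a + b) (l + m) (br x y))].

Definition Lroot (k : fieldType) (d n : nat) (L : lmodType k)
  (Lg : 'rV[k]_d -> 'rV[int]_n -> L -> Prop) (a : 'rV[k]_d) (x : L) : Prop :=
  exists (s : seq 'rV[int]_n) (f : 'rV[int]_n -> L),
    (forall l, Lg a l (f l)) /\ x = \sum_(l <- s) f l.

Definition Ldeg (k : fieldType) (d n : nat) (L : lmodType k)
  (Lg : 'rV[k]_d -> 'rV[int]_n -> L -> Prop) (l : 'rV[int]_n) (x : L) : Prop :=
  exists (s : seq 'rV[k]_d) (f : 'rV[k]_d -> L),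
    (forall a, Lg a l (f a)) /\ x = \sum_(a <- s) f a.

Definition is_lie_torus (k : fieldType) (d n : nat) (D : seq 'rV[k]_d)
  (cor : 'rV[k]_d -> 'cV[k]_d) (L : lmodType k) (br : L -> L -> L)
  (Lg : 'rV[k]_d -> 'rV[int]_n -> L -> Prop) : Prop :=
  is_QL_grading D br Lg /\
  [/\
      (forall a, inQ D a -> ((exists x, Lroot Lg a x /\ x != 0) <-> a \in D)),
      (forall a, in_Dx_ind D a -> exists x, Lg a 0 x /\ x != 0),
      (forall a l, in_Dx D a -> (exists x, Lg a l x /\ x != 0) ->
         exists e f, [/\ Lg a l e, Lg (- a) (- l) f,
            (forall z, Lg a l z <-> exists c : k, z = c *: e),
            (forall z, Lg (- a) (- l) z <-> exists c : k, z = c *: f) &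
            (forall b z, inQ D b -> Lroot Lg b z -> br (br e f) z = pairing cor b a *: z)]),
      (forall P : L -> Prop, is_subspace P -> (forall x y, P x -> P y -> P (br x y)) ->
         (forall a x, in_Dx D a -> Lroot Lg a x -> P x) -> forall x, P x) &
      (forall m : 'rV[int]_n, exists (s : seq 'rV[int]_n) (c : 'rV[int]_n -> int),
         (forall l, l \in s -> exists x, Ldeg Lg l x /\ x != 0) /\
         m = \sum_(l <- s) l *~ c l)].

(* Main.v *)
Require Import Defs.
From HB Require Import structures.
From mathcomp Require Import all_boot all_order all_algebra.
From mathcomp Require Import ring zify.
Import Order.TTheory GRing.Theory Num.Theory.
Local Open Scope ring_scope.

Definition phi {n : nat} (t : int) (v : 'rV[int]_n) : int :=
  \sum_(i < n) v ord0 i * t ^+ i.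

Lemma phiD n t (u v : 'rV[int]_n) : phi t (u + v) = phi t u + phi t v.
Proof. rewrite /phi -big_split /=; apply: eq_bigr => i _; by rewrite mxE mulrDl. Qed.

Lemma phiN n t (u : 'rV[int]_n) : phi t (- u) = - phi t u.
Proof. rewrite /phi -sumrN; apply: eq_bigr => i _; by rewrite mxE mulNr. Qed.

Definition vpoly {n} (v : 'rV[int]_n) : {poly int} :=
  \poly_(i < n) (\sum_(j < n | val j == i) v ord0 j).

Lemma vcoef n (v : 'rV[int]_n) (j : 'I_n) : \sum_(k < n | val k == val j) v ord0 k = v ord0 j.
Proof. by apply: big_pred1 => k /=. Qed.

Lemma vpoly_neq0 n (v : 'rV[int]_n) : v != 0 -> vpoly v != 0.
Proof.
move=> vn0; apply/eqP => h; move/eqP: vn0; apply; apply/rowP => j.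
rewrite mxE; have := congr1 (fun p : {poly int} => p`_j) h.
by rewrite coef_poly ltn_ord coef0 vcoef => ->.
Qed.

Lemma phi_vpoly n t (v : 'rV[int]_n) : phi t v = (vpoly v).[t].
Proof. rewrite /phi /vpoly horner_poly; apply: eq_bigr => i _; by rewrite vcoef. Qed.

Lemma exists_nonroot (p : {poly int}) : p != 0 -> exists t : int, p.[t] != 0.
Proof.
move=> pn0.
have : has (fun t => p.[t] != 0) [seq i%:Z | i <- iota 0 (size p)].
  apply/negPn/negP => /hasPn H.
  have Hall : all (root p) [seq i%:Z | i <- iota 0 (size p)].
    by apply/allP => t /H; rewrite /root negbK.
  have Hu : uniq [seq i%:Z | i <- iota 0 (size p)].
    rewrite map_inj_uniq ?iota_uniq //; by move=> a b [].
  by have := max_poly_roots pn0 Hall Hu; rewrite size_map size_iota ltnn.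
by case/hasP => t _ ?; exists t.
Qed.

Lemma exists_phi n (F : seq 'rV[int]_n) : exists t, {in F &, injective (phi t)}.
Proof.
pose P := \prod_(u <- undup F) \prod_(w <- undup F | u != w) vpoly (u - w).
have Pn0 : P != 0.
  rewrite prodf_seq_neq0; apply/allP => u _ /=.
  rewrite prodf_seq_neq0; apply/allP => w _ /=; apply/implyP => uw.
  by apply: vpoly_neq0; rewrite subr_eq0.
have [t Ht] := @exists_nonroot P Pn0; exists t => u w uF wF e.
apply/eqP/negPn/negP => uw.
move: Ht; rewrite /P horner_prod prodf_seq_eq0 => /negP; apply.
apply/hasP; exists u; rewrite ?mem_undup //=.
rewrite horner_prod prodf_seq_eq0; apply/hasP; exists w; rewrite ?mem_undup //= uw /=.
by rewrite -phi_vpoly phiD phiN e subrr.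
Qed.

Set Implicit Arguments. Unset Strict Implicit.

Lemma br0l (k : fieldType) (L : lmodType k) (br : L -> L -> L) :
  is_lie_bracket br -> forall z, br 0 z = 0.
Proof.
case=> Hl _ _ _ z; have := Hl 1 0 0 z; rewrite !scale1r addr0 => h.
by apply: (addrI (br 0 z)); rewrite addr0 -h.
Qed.

Lemma br0r (k : fieldType) (L : lmodType k) (br : L -> L -> L) :
  is_lie_bracket br -> forall z, br z 0 = 0.
Proof.
case=> _ Hr _ _ z; have := Hr 1 0 0 z; rewrite !scale1r addr0 => h.
by apply: (addrI (br z 0)); rewrite addr0 -h.
Qed.

Lemma brZl (k : fieldType) (L : lmodType k) (br : L -> L -> L) :
  is_lie_bracket br -> forall c x z, br (c *: x) z = c *: br x z.
Proof. move=> H c x z; have := H; case=> Hl _ _ _; by rewrite -[c *: x]addr0 Hl (br0l H) addr0. Qed.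

Lemma brZr (k : fieldType) (L : lmodType k) (br : L -> L -> L) :
  is_lie_bracket br -> forall c x z, br z (c *: x) = c *: br z x.
Proof. move=> H c x z; have := H; case=> _ Hr _ _; by rewrite -[c *: x]addr0 Hr (br0r H) addr0. Qed.

Lemma brDl (k : fieldType) (L : lmodType k) (br : L -> L -> L) :
  is_lie_bracket br -> forall x y z, br (x + y) z = br x z + br y z.
Proof. move=> H x y z; have := H; case=> Hl _ _ _; by have := Hl 1 x y z; rewrite !scale1r. Qed.

Lemma brDr (k : fieldType) (L : lmodType k) (br : L -> L -> L) :
  is_lie_bracket br -> forall x y z, br z (x + y) = br z x + br z y.
Proof. move=> H x y z; have := H; case=> _ Hr _ _; by have := Hr 1 x y z; rewrite !scale1r. Qed.

Lemma brNl (k : fieldType) (L : lmodType k) (br : L -> L -> L) :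
  is_lie_bracket br -> forall x z, br (- x) z = - br x z.
Proof. move=> H x z; by rewrite -scaleN1r (brZl H) scaleN1r. Qed.

Lemma brNr (k : fieldType) (L : lmodType k) (br : L -> L -> L) :
  is_lie_bracket br -> forall x z, br z (- x) = - br z x.
Proof. move=> H x z; by rewrite -scaleN1r (brZr H) scaleN1r. Qed.

Lemma br_anti (k : fieldType) (L : lmodType k) (br : L -> L -> L) :
  is_lie_bracket br -> forall x y, br x y = - br y x.
Proof.
move=> H x y; have := H; case=> _ _ Hxx _.
have := Hxx (x + y).
rewrite (brDl H) !(brDr H) !Hxx add0r addr0 => h.
by apply/eqP; rewrite -addr_eq0 h.
Qed.

Lemma br_jac (k : fieldType) (L : lmodType k) (br : L -> L -> L) :
  is_lie_bracket br -> forall e f w, br e (br f w) = br (br e f) w + br f (br e w).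
Proof.
move=> H e f w; have := H; case=> _ _ _ J.
have := J e f w; rewrite (br_anti H w (br e f)) (br_anti H w e) (brNr H) => J'.
apply/eqP; rewrite -subr_eq0 -J'; apply/eqP.
by rewrite opprD addrA -addrA (addrC (- _)) addrA.
Qed.

Lemma br_suml (k : fieldType) (L : lmodType k) (br : L -> L -> L) (I : Type) :
  is_lie_bracket br -> forall (s : seq I) (P : pred I) (F : I -> L) z,
  br (\sum_(i <- s | P i) F i) z = \sum_(i <- s | P i) br (F i) z.
Proof.
move=> H s P F z; elim: s => [|i s IH]; first by rewrite !big_nil (br0l H).
by rewrite !big_cons; case: (P i); rewrite ?(brDl H) IH.
Qed.

Lemma br_sumr (k : fieldType) (L : lmodType k) (br : L -> L -> L) (I : Type) :
  is_lie_bracket br -> forall (s : seq I) (P : pred I) (F : I -> L) z,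
  br z (\sum_(i <- s | P i) F i) = \sum_(i <- s | P i) br z (F i).
Proof.
move=> H s P F z; elim: s => [|i s IH]; first by rewrite !big_nil (br0r H).
by rewrite !big_cons; case: (P i); rewrite ?(brDr H) IH.
Qed.

Lemma sub_sum (k : fieldType) (L : lmodType k) (Q : L -> Prop) (I : Type) :
  is_subspace Q -> forall (s : seq I) (P : pred I) (F : I -> L),
  (forall i, P i -> Q (F i)) -> Q (\sum_(i <- s | P i) F i).
Proof.
case=> H0 HD _ s P F HF; elim: s => [|i s IH]; first by rewrite big_nil.
rewrite big_cons; case Pi: (P i) => //; exact: HD (HF _ Pi) IH.
Qed.

Unset Implicit Arguments. Set Strict Implicit.

Lemma inQ_mul (k : fieldType) d (D : seq 'rV[k]_d) a (m : nat) :
  inQ D a -> inQ D (- (a *+ m)).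
Proof.
case=> c ->; exists (fun b => c b * - (m%:Z)).
rewrite -sumrMnl -sumrN; apply: eq_bigr => b _.
by rewrite mulrzA mulrNz pmulrn.
Qed.

Lemma pairing_mul (k : fieldType) d (cor : 'rV[k]_d -> 'cV[k]_d) a (m : nat) :
  pairing cor (- (a *+ m)) a = - (pairing cor a a *+ m).
Proof.
by rewrite /pairing mulNmx -scaler_nat -scalemxAl !mxE mulr_natl.
Qed.

Lemma Lroot1 (k : fieldType) (d n : nat) (L : lmodType k)
  (Lg : 'rV[k]_d -> 'rV[int]_n -> L -> Prop) b l z :
  (forall a l, is_subspace (Lg a l)) -> Lg b l z -> Lroot Lg b z.
Proof.
move=> Hs Hz; exists [:: l], (fun l' => if l' == l then z else 0); split.
  by move=> l'; case: eqP => [->|_] //; case: (Hs b l').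
by rewrite big_seq1 eqxx.
Qed.

Arguments inQ_mul {k d D a} m _.
Arguments Lroot1 {k d n L Lg b l z}.

Lemma natmul_inj (k : fieldType) (V : lmodType k) (a : V) i j :
  [pchar k] =i pred0 -> a != 0 -> a *+ i = a *+ j -> i = j.
Proof.
move=> ch an0.
have key : forall i j, (i < j)%N -> a *+ i = a *+ j -> False.
  move=> i0 j0 lt e; move: e; rewrite -(subnKC (ltnW lt)) mulrnDr => e.
  have : a *+ (j0 - i0) = 0 by apply: (addrI (a *+ i0)); rewrite addr0 -e.
  move/eqP; rewrite -scaler_nat scaler_eq0 (negbTE an0) orbF.
  by rewrite (pcharf0P _).1 // subn_eq0 leqNgt lt.
case: (ltngtP i j) => [lt e|lt e|//]; first by case: (key _ _ lt e).
by case: (key _ _ lt (esym e)).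
Qed.

Lemma nat_neq0 (k : fieldType) j : [pchar k] =i pred0 -> (j.+1)%:R != 0 :> k.
Proof. by move=> ch; rewrite (pcharf0P _).1. Qed.

Arguments natmul_inj {k V a i j}.
Arguments nat_neq0 {k} j _.

Lemma sl2_nz (k : fieldType) (d n : nat) (D : seq 'rV[k]_d)
  (cor : 'rV[k]_d -> 'cV[k]_d) (L : lmodType k) (br : L -> L -> L)
  (Lg : 'rV[k]_d -> 'rV[int]_n -> L -> Prop) :
  [pchar k] =i pred0 ->
  (forall a, in_Dx D a -> pairing cor a a = 2%:R) ->
  is_lie_bracket br ->
  is_lie_torus D cor br Lg ->
  forall a l m u v, in_Dx D a -> Lg a l u -> u != 0 -> Lg (- a) m v -> v != 0 ->
  br u v != 0.
Proof.
move=> ch Hpair Hbr [[Hsub HQ _ _ Hgr] [HLT1 _ HLT2 _ _]] a l m u v Ha Hu un0 Hv vn0.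
have [e [f [He Hf HLe _ Hact]]] := HLT2 a l Ha (ex_intro _ u (conj Hu un0)).
have [c uc] := (HLe u).1 Hu.
have cn0 : c != 0 by apply: contraNneq un0 => c0; rewrite uc c0 scale0r.
apply/negP => /eqP buv.
have bev : br e v = 0.
  by move: buv; rewrite uc (brZl Hbr) => /eqP; rewrite scaler_eq0 (negbTE cn0) => /eqP.
have QA : inQ D a := HQ a l u Hu un0.
pose w j := iter j (br f) v.
have Hw : forall j, Lg (- (a *+ j.+1)) (m + (- l) *+ j) (w j).
  elim=> [|j IH]; first by rewrite mulr1n mulr0n addr0.
  have := Hgr _ _ _ _ _ _ Hf IH.
  have -> : - (a *+ j.+2) = - a + - (a *+ j.+1) by rewrite mulrS opprD.
  by have -> : m + (-l) *+ j.+1 = -l + (m + (-l) *+ j) by rewrite mulrS addrCA.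
have Hh : forall j, br (br e f) (w j) = - (2%:R * (j.+1)%:R) *: w j.
  move=> j; rewrite (Hact _ _ (inQ_mul j.+1 QA) (Lroot1 Hsub (Hw j))).
  by rewrite pairing_mul Hpair // mulr_natr.
have Hc : forall j, br e (w j) = - (j%:R * (j%:R + 1)) *: w j.-1.
  elim=> [|j IH]; first by rewrite /= bev mul0r oppr0 scale0r.
  have -> : w j.+1 = br f (w j) by [].
  rewrite (br_jac Hbr) Hh IH (brZr Hbr).
  case: j IH => [|j] IH.
    rewrite mul0r oppr0 scale0r addr0; congr (_ *: _); ring.
  have -> : br f (w j.+1.-1) = w j.+1 by [].
  rewrite -scalerDl /=; congr (_ *: _).
  rewrite -[in RHS](addn1 j.+1) natrD -(addn1 j) natrD; ring.
have down : forall j, w j.+1 = 0 -> w j = 0.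
  move=> j wj; have := Hc j.+1; rewrite wj (br0r Hbr) => /esym/eqP.
  rewrite scaler_eq0 oppr_eq0 mulf_eq0 (negbTE (nat_neq0 _ ch)) /=.
  rewrite natr1 (negbTE (nat_neq0 _ ch)) /= => /eqP.
  done.
have fromN : forall j, w j = 0 -> v = 0.
  elim=> [//|j IH] /down; exact: IH.
have [N wN] : exists N, w N = 0.
  pose s := iota 0 (size D).+1.
  have : has (fun j => w j == 0) s.
    apply/negPn/negP => /hasPn H.
    have Hsub' : {subset [seq - (a *+ j.+1) | j <- s] <= D}.
      move=> b /mapP [j js ->]; have wn0 := H j js.
      exact: (HLT1 _ (inQ_mul j.+1 QA)).1 (ex_intro _ (w j) (conj (Lroot1 Hsub (Hw j)) wn0)).
    have Hu' : uniq [seq - (a *+ j.+1) | j <- s].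
      rewrite map_inj_uniq ?iota_uniq // => i j /oppr_inj e'.
      by have [] := natmul_inj ch Ha.2 e'.
    by have := uniq_leq_size Hu' Hsub'; rewrite size_map size_iota ltnn.
  by case/hasP => j _ /eqP wj; exists j.
by move/eqP: vn0; apply; apply: (fromN N).
Qed.

Lemma sum_pred1 (V : zmodType) (I : eqType) (r : seq I) (j : I) (F : I -> V) :
  uniq r -> j \in r -> \sum_(i <- r | j == i) F i = F j.
Proof.
move=> ur jr; rewrite -big_filter.
rewrite (eq_filter (a2 := pred1 j)); last by move=> i /=; rewrite eq_sym.
by rewrite filter_pred1_uniq // big_seq1.
Qed.

Lemma decomp (k : fieldType) d n (L : lmodType k)
  (Lg : 'rV[k]_d -> 'rV[int]_n -> L -> Prop) a x :
  (forall a l, is_subspace (Lg a l)) -> Lroot Lg a x ->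
  exists (S : seq 'rV[int]_n) (X : 'rV[int]_n -> L),
    [/\ uniq S, forall l, Lg a l (X l), forall l, l \in S -> X l != 0 &
        x = \sum_(l <- S) X l].
Proof.
move=> Hsub [s [f [Hf ->]]].
pose X l := \sum_(i <- s | l == i) f i.
exists [seq l <- undup s | X l != 0], X; split.
- by rewrite filter_uniq ?undup_uniq.
- move=> l; apply: sub_sum => // i /eqP ->; exact: Hf.
- by move=> l; rewrite mem_filter => /andP [].
rewrite big_filter.
have -> : \sum_(i <- s) f i = \sum_(l <- undup s) X l.
  rewrite /X [RHS](eq_bigr (fun l => \sum_(i <- s) (if l == i then f i else 0))); last first.
    by move=> l _; rewrite big_mkcond.
  rewrite exchange_big /=; apply: eq_big_seq => i iS; rewrite -big_mkcond /=.
  rewrite (eq_bigl (fun l => i == l)); last by move=> l; rewrite eq_sym.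
  by rewrite sum_pred1 ?undup_uniq ?mem_undup.
rewrite [LHS](bigID (fun l => X l != 0)) /= [X in _ + X]big1 ?addr0 //.
by move=> l /negPn/eqP.
Qed.

Lemma seq_max (T : eqType) (g : T -> int) (a : T) (s : seq T) :
  exists2 z, z \in a :: s & forall y, y \in a :: s -> g y <= g z.
Proof.
elim: s a => [|b s IH] a.
  by exists a; rewrite ?mem_seq1 // => y; rewrite mem_seq1 => /eqP ->.
have [z zs Hz] := IH b.
case: (lerP (g a) (g z)) => h.
  exists z; first by rewrite in_cons zs orbT.
  by move=> y; rewrite in_cons => /orP [/eqP ->|/Hz].
exists a; first by rewrite in_cons eqxx.
move=> y; rewrite in_cons => /orP [/eqP ->|/Hz hy] //.
exact: le_trans hy (ltW h).
Qed.

Lemma seq_single (T : eqType) (s : seq T) (z : T) :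
  uniq s -> z \in s -> (forall y, y \in s -> y = z) -> s = [:: z].
Proof.
case: s => [//|a [|b s]] /=.
  by move=> _ _ H; rewrite (H a) // mem_seq1.
case/andP => nin _ _ H.
have ha := H a (mem_head a _).
have hb : b = z by apply: H; rewrite in_cons mem_head orbT.
by move: nin; rewrite ha hb in_cons eqxx.
Qed.

Arguments sl2_nz {k d n D cor L br Lg}.

Lemma ext (k : fieldType) (d n : nat) (D : seq 'rV[k]_d)
  (cor : 'rV[k]_d -> 'cV[k]_d) (L : lmodType k) (br : L -> L -> L)
  (Lg : 'rV[k]_d -> 'rV[int]_n -> L -> Prop) :
  [pchar k] =i pred0 ->
  (forall a, in_Dx D a -> pairing cor a a = 2%:R) ->
  is_lie_bracket br ->
  is_lie_torus D cor br Lg ->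
  forall a (S T : seq 'rV[int]_n) (X Y : 'rV[int]_n -> L),
  in_Dx D a ->
  (forall l, Lg a l (X l)) -> (forall l, l \in S -> X l != 0) ->
  (forall l, Lg (- a) l (Y l)) -> (forall l, l \in T -> Y l != 0) ->
  uniq S -> uniq T ->
  Lg 0 0 (br (\sum_(l <- S) X l) (\sum_(l <- T) Y l)) ->
  forall l1 m1, l1 \in S -> m1 \in T ->
  (forall l m, l \in S -> m \in T -> l + m = l1 + m1 -> l = l1 /\ m = m1) ->
  l1 + m1 = 0.
Proof.
move=> ch Hpair Hbr HLT a S T X Y Ha HX XS HY YT uS uT Hxy l1 m1 l1S m1T Huniq.
case: (HLT) => [[Hsub HQ _ Hdir Hgr] _].
apply/eqP/negPn/negP => nu0.
set nu := l1 + m1 in nu0.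
pose B l m := br (X l) (Y m).
pose U := undup (0 :: [seq l + m | l <- S, m <- T]).
pose z := br (\sum_(l <- S) X l) (\sum_(l <- T) Y l).
pose g nu' := \sum_(l <- S) \sum_(m <- T | l + m == nu') B l m - (if 0 == nu' then z else 0).
pose fam (i : 'rV[k]_d * 'rV[int]_n) := if i.1 == 0 then g i.2 else 0.
have Hfam : forall i, Lg i.1 i.2 (fam i).
  case=> b nu'; rewrite /fam /=; case: eqP => [->|_]; last by case: (Hsub b nu').
  have [S0 SD SZ] := Hsub 0 nu'.
  rewrite /g; apply: SD.
    apply: sub_sum => // l _; apply: sub_sum => // m /eqP <-.
    by have := Hgr _ _ _ _ _ _ (HX l) (HY m); rewrite addrN.
  rewrite -scaleN1r; apply: SZ; case: eqP => [<-|_] //.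
have zE : z = \sum_(l <- S) \sum_(m <- T) B l m.
  rewrite /z (br_suml Hbr); apply: eq_bigr => l _; by rewrite (br_sumr Hbr).
have uU : uniq U := undup_uniq _.
have Hsum : \sum_(i <- [seq (0, nu') | nu' <- U]) fam i = 0.
  rewrite big_map (eq_bigr g); last by move=> nu' _; rewrite /fam /= eqxx.
  rewrite /g sumrB -big_mkcond sum_pred1 // ?mem_undup ?mem_head //.
  rewrite exchange_big /= zE; apply/eqP; rewrite subr_eq0; apply/eqP.
  apply: eq_big_seq => l lS.
  rewrite (eq_bigr (fun nu' => \sum_(m <- T) (if l + m == nu' then B l m else 0))); last first.
    by move=> nu' _; rewrite big_mkcond.
  rewrite exchange_big /=; apply: eq_big_seq => m mT; rewrite -big_mkcond /=.
  rewrite sum_pred1 // mem_undup in_cons; apply/orP; right; exact: allpairs_f.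
have Hnu : fam (0, nu) = 0.
  apply: (Hdir _ fam _ Hfam Hsum).
    by rewrite map_inj_uniq // => ? ? [].
  by apply: map_f; rewrite mem_undup in_cons; apply/orP; right; exact: allpairs_f.
move: Hnu; rewrite /fam /= eqxx /g eq_sym (negbTE nu0) subr0.
rewrite (bigD1_seq l1) //= [X in _ + X]big1_seq ?addr0; last first.
  move=> l /andP [nl lS]; apply: big1_seq => m /andP [/eqP e mT].
  by have [ll _] := Huniq l m lS mT e; move/eqP: nl.
rewrite (eq_bigl (fun m => m1 == m)); last by move=> m; rewrite /nu (inj_eq (addrI l1)) eq_sym.
rewrite sum_pred1 // => /eqP.
by apply/negP; apply: (sl2_nz ch Hpair Hbr HLT _ _ _ _ _ Ha (HX l1) (XS l1 l1S) (HY m1) (YT m1 m1T)).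
Qed.

Arguments ext {k d n D cor L br Lg}.
Arguments decomp {k d n L Lg a x}.
Arguments exists_phi {n}.

Lemma smax (T : eqType) (s : seq T) (g : T -> int) (x0 : T) :
  x0 \in s -> exists2 z, z \in s & forall y, y \in s -> g y <= g z.
Proof. case: s => [//|b s] _; exact: seq_max. Qed.
Arguments smax {T s} g {x0}.

Lemma i1 (a b c d : int) : a + b = c + d -> a <= c -> b <= d -> a = c.
Proof. lia. Qed.
Lemma i2 (a b c d : int) : a + b = c + d -> - a <= - c -> - b <= - d -> a = c.
Proof. lia. Qed.
Lemma i3 (x c c0 d1 d0 : int) : x <= c -> - x <= - c0 -> - d1 <= - d0 -> c = - d1 -> c0 = - d0 -> x = c.
Proof. lia. Qed.

Theorem lemma3p6 (k : fieldType) (d n : nat) (D : seq 'rV[k]_d)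
  (cor : 'rV[k]_d -> 'cV[k]_d) (L : lmodType k) (br : L -> L -> L)
  (Lg : 'rV[k]_d -> 'rV[int]_n -> L -> Prop) :
  [pchar k] =i pred0 ->
  is_irr_finite_root_system D cor ->
  is_lie_bracket br ->
  is_lie_torus D cor br Lg ->
  forall (a : 'rV[k]_d) (x y : L),
    in_Dx D a ->
    Lroot Lg a x -> x != 0 ->
    Lroot Lg (- a) y -> y != 0 ->
    Lg 0 0 (br x y) ->
    exists l : 'rV[int]_n, Lg a l x /\ Lg (- a) (- l) y.
Proof.
move=> ch [H0D Hrs Hirr] Hbr HLT a x y Ha Hx xn0 Hy yn0 Hxy.
have Hpair : forall a, in_Dx D a -> pairing cor a a = 2%:R by case: Hrs.
case: (HLT) => [[Hsub _ _ _ _] _].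
have [S [X [uS HX XS xE]]] := decomp Hsub Hx.
have [T [Y [uT HY YT yE]]] := decomp Hsub Hy.
rewrite xE yE in Hxy.
have [s0 s0S] : exists s0, s0 \in S.
  case: S uS XS xE Hxy => [|s0 S'] _ _ xE' _; last by exists s0; rewrite mem_head.
  by move: xn0; rewrite xE' big_nil eqxx.
have [t0 t0T] : exists t0, t0 \in T.
  case: T uT YT yE Hxy => [|t0 T'] _ _ yE' _; last by exists t0; rewrite mem_head.
  by move: yn0; rewrite yE' big_nil eqxx.
have [t tinj] := exists_phi (S ++ T).
pose P := @phi n t.
have [l1 l1S Hl1] := smax P s0S.
have [m1 m1T Hm1] := smax P t0T.
have [l0 l0S Hl0] := smax (fun v => - P v) s0S.
have [m0 m0T Hm0] := smax (fun v => - P v) t0T.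
have injS : forall l l', l \in S -> l' \in S -> P l = P l' -> l = l'.
  by move=> l l' lS l'S; apply: tinj; rewrite mem_cat ?lS ?l'S.
have injT : forall l l', l \in T -> l' \in T -> P l = P l' -> l = l'.
  by move=> l l' lS l'S; apply: tinj; rewrite mem_cat ?lS ?l'S ?orbT.
have E1 : l1 + m1 = 0.
  apply: (ext ch Hpair Hbr HLT a S T X Y Ha HX XS HY YT uS uT Hxy l1 m1 l1S m1T).
  move=> l m lS mT e.
  have e' : P l + P m = P l1 + P m1 by rewrite /P -!phiD e.
  have hl := Hl1 l lS; have hm := Hm1 m mT.
  have el : l = l1 by apply: injS => //; exact: i1 e' hl hm.
  by split => //; move: e; rewrite el => /addrI.
have E0 : l0 + m0 = 0.
  apply: (ext ch Hpair Hbr HLT a S T X Y Ha HX XS HY YT uS uT Hxy l0 m0 l0S m0T).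
  move=> l m lS mT e.
  have e' : P l + P m = P l0 + P m0 by rewrite /P -!phiD e.
  have hl := Hl0 l lS; have hm := Hm0 m mT.
  have el : l = l0 by apply: injS => //; exact: i2 e' hl hm.
  by split => //; move: e; rewrite el => /addrI.
have P1 : P l1 = - P m1.
  by move/eqP: E1; rewrite addr_eq0 => /eqP ->; rewrite /P phiN.
have P0 : P l0 = - P m0.
  by move/eqP: E0; rewrite addr_eq0 => /eqP ->; rewrite /P phiN.
have Sone : S = [:: l1].
  apply: seq_single => // l lS; apply: injS => //.
  exact: i3 (Hl1 l lS) (Hl0 l lS) (Hm0 m1 m1T) P1 P0.
have Tone : T = [:: m1].
  apply: seq_single => // m mT; apply: injT => //.
  apply: i3 (Hm1 m mT) (Hm0 m mT) (Hl0 l1 l1S) _ _.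
    by rewrite P1 opprK.
  by rewrite P0 opprK.
exists l1; rewrite xE yE Sone Tone !big_seq1; split => //.
have -> : - l1 = m1 by move/eqP: E1; rewrite addrC addr_eq0 => /eqP.
exact: HY.
Qed.
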